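(* Let $\mathcal{P}=\{X_i\mid i\in I\}$ be a partition of a set $X$, and let $f\in\Sigma(X,\mathcal{P})$. Then $f$ is an idempotent ($f^2=f$) if and only if each block map of $B(f,I)$ is an idempotent.
   Context: Maps are written on the right and composed left to right. For a partition $\mathcal{P}=\{X_i\mid i\in I\}$ of $X$ (distinct indices for distinct blocks), $T(X,\mathcal{P})=\{f\colon X\to X \mid \forall i\ \exists j:\ X_if\subseteq X_j\}$ and $\Sigma(X,\mathcal{P})=\{f\in T(X,\mathcal{P})\mid Xf\cap X_i\neq\emptyset\ \forall i\in I\}$. A block map is a map whose domain and codomain are both blocks of $\mathcal{P}$. If $Af\subseteq B$, the map $g\colon A\to B$, $xg=xf$, is said to be induced by $f$. For $f\in T(X,\mathcal{P})$ and $i\in I$, let $f_i\colon X_i\to X_j$ be the block map induced by $f$, where $X_j$ is the (unique) block containing $X_if$; $B(f,I)=\{f_i\mid i\in I\}$. A block map is an idempotent if its domain equals its codomain and it satisfies $f_i f_i=f_i$. *)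

(* Defs.v *)
(* A partition P = {X_i | i in I} of X (distinct indices for distinct blocks,
   blocks nonempty) is represented by a surjective block-index map
   p : X -> I, with X_i = { x | p x = i }. *)
Definition partition_map {X I : Type} (p : X -> I) : Prop :=
  forall i : I, exists x : X, p x = i.

Definition block {X I : Type} (p : X -> I) (i : I) (x : X) : Prop := p x = i.

Definition maps_into {X I : Type} (p : X -> I) (f : X -> X) (i j : I) : Prop :=
  forall x, block p i x -> block p j (f x).

Definition in_T {X I : Type} (p : X -> I) (f : X -> X) : Prop :=
  forall i : I, exists j : I, maps_into p f i j.

Definition in_Sigma {X I : Type} (p : X -> I) (f : X -> X) : Prop :=
  in_T p f /\ forall i : I, exists x : X, block p i (f x).

Definition idempotent {X : Type} (f : X -> X) : Prop :=
  (fun x => f (f x)) = f.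

(* The block map f_i : X_i -> X_j induced by f (X_j the unique block containing
   X_i f) is an idempotent: its domain equals its codomain (j = i, i.e. X_i f is
   contained in X_i) and f_i f_i = f_i as maps on X_i. *)
Definition block_map_idempotent {X I : Type} (p : X -> I) (f : X -> X) (i : I)
  : Prop :=
  maps_into p f i i /\ (forall x, block p i x -> f (f x) = f x).

(* Main.v *)
Require Import Defs.
From Stdlib Require Import FunctionalExtensionality.

Theorem theorem5p6 (X I : Type) (p : X -> I) (f : X -> X) :
  partition_map p ->
  in_Sigma p f ->
  (idempotent f <-> forall i : I, block_map_idempotent p f i).
Proof.
  intros _ [HT HS]. unfold idempotent, block_map_idempotent, maps_into, block in *.
  split.
  - intros Hid i.
    assert (Hff : forall x, f (f x) = f x) by (intro x; exact (equal_f Hid x)).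
    destruct (HS i) as [y Hy]. destruct (HT i) as [j Hj].
    assert (Hji : j = i).
    { rewrite <- (Hj (f y) Hy). rewrite Hff. exact Hy. }
    subst j. split.
    + exact Hj.
    + intros x _. apply Hff.
  - intros H. apply functional_extensionality. intro x.
    destruct (H (p x)) as [_ H2]. apply H2. reflexivity.
Qed.
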